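(* Let $0<\alpha<1$ and let $p:\mathbb{R}\to\mathbb{R}$ be Lipschitz-continuous and $2\pi$-periodic with $p_2\le p(t)\le p_1<0$ for all $t$. Then $\lim_{v_0\to+\infty}\big(S_1(t_0,v_0)-t_0\big)=+\infty$ uniformly in $t_0\in[0,2\pi]$.
   Context: Let $\eta=((\alpha-1)p_1)^{-1/\alpha}$ and $\gamma=\sqrt{2(p_1-p_2)\eta}$. For $t_0\in\mathbb{R}$ and $v_0>\gamma$ there is a unique maximal solution $u$ of $\ddot u-\frac{1}{u^\alpha}=p(t)$, $u>0$, on an interval $(t_0,t_1)$ with $t_1<+\infty$, such that $u(t)\to0$ as $t\to t_0^+$ and as $t\to t_1^-$, $\dot u(t_0^+)=v_0$, and $\dot u(t_1^-)$ exists and is negative. The successor map is $S(t_0,v_0)=(S_1(t_0,v_0),S_2(t_0,v_0))=(t_1,-\dot u(t_1^-))$. *)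

(* Defs.v *)
From Stdlib Require Import Reals.
From Coquelicot Require Import Coquelicot.
Open Scope R_scope.

Definition eta_c (alpha p1 : R) : R := Rpower ((alpha - 1) * p1) (- / alpha).
Definition gamma_c (alpha p1 p2 : R) : R := sqrt (2 * (p1 - p2) * eta_c alpha p1).

Definition bounce_solution (alpha : R) (p : R -> R) (t0 v0 t1 : R) (u : R -> R) : Prop :=
  t0 < t1 /\
  (forall t, t0 < t < t1 -> 0 < u t) /\
  exists u' : R -> R,
    (forall t, t0 < t < t1 ->
       is_derive u t (u' t) /\
       is_derive u' t (/ Rpower (u t) alpha + p t)) /\
    filterlim u (at_right t0) (locally 0) /\
    filterlim u' (at_right t0) (locally v0) /\
    filterlim u (at_left t1) (locally 0) /\
    (exists w, w < 0 /\ filterlim u' (at_left t1) (locally w)).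

Definition S1_is (alpha : R) (p : R -> R) (t0 v0 t1 : R) : Prop :=
  exists u : R -> R, bounce_solution alpha p t0 v0 t1 u.

(* Main.v *)
Require Import Defs.
From Stdlib Require Import Reals Lra.
From Coquelicot Require Import Coquelicot.
Open Scope R_scope.

Lemma mono_aux (alpha p2 : R) (p : R -> R) (t0 t1 : R) (u u' : R -> R) :
  (forall t : R, p2 <= p t) ->
  (forall t, t0 < t < t1 -> 0 < u t) ->
  (forall t, t0 < t < t1 -> is_derive u t (u' t) /\
       is_derive u' t (/ Rpower (u t) alpha + p t)) ->
  forall s t, t0 < s -> s < t -> t < t1 -> u' t - u' s >= p2 * (t - s).
Proof.
  intros Hp Hu Hd s t Hs Hst Ht.
  destruct (MVT_gen u' s t (fun x => / Rpower (u x) alpha + p x)) as [c [Hc Heq]].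
  - intros x Hx. rewrite Rmin_left in Hx by lra. rewrite Rmax_right in Hx by lra.
    apply Hd. lra.
  - intros x Hx. rewrite Rmin_left in Hx by lra. rewrite Rmax_right in Hx by lra.
    apply continuity_pt_filterlim. apply (@ex_derive_continuous R_AbsRing R_NormedModule).
    eexists. apply (proj2 (Hd x ltac:(lra))).
  - rewrite Rmin_left in Hc by lra. rewrite Rmax_right in Hc by lra.
    rewrite Heq.
    assert (0 < / Rpower (u c) alpha).
    { apply Rinv_0_lt_compat. unfold Rpower. apply exp_pos. }
    specialize (Hp c). nra.
Qed.

Theorem lemma4p5 (alpha p1 p2 : R) (p : R -> R) :
  0 < alpha < 1 ->
  (exists L : R, forall s t : R, Rabs (p s - p t) <= L * Rabs (s - t)) ->
  (forall t : R, p (t + 2 * PI) = p t) ->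
  (forall t : R, p2 <= p t <= p1) ->
  p1 < 0 ->
  forall M : R, exists V : R,
    forall t0 v0 t1 : R,
      0 <= t0 <= 2 * PI ->
      gamma_c alpha p1 p2 < v0 ->
      V < v0 ->
      S1_is alpha p t0 v0 t1 ->
      M < t1 - t0.
Proof.
  intros Ha _ _ Hp Hp1 M.
  assert (Hp2 : p2 < 0) by (specialize (Hp 0); lra).
  exists (- p2 * Rabs M).
  intros t0 v0 t1 _ _ HV [u [Ht01 [Hu [u' [Hd [_ [Hl0 [_ [w [Hw Hl1]]]]]]]]]].
  destruct (Rlt_or_le M (t1 - t0)) as [H|H]; [exact H|exfalso].
  assert (HM : t1 - t0 <= Rabs M) by (pose proof (Rle_abs M); lra).
  set (c := v0 + p2 * (t1 - t0)).
  assert (Hc : 0 < c) by (unfold c; nra).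
  assert (Hmono := mono_aux alpha p2 p t0 t1 u u' (fun t => proj1 (Hp t)) Hu Hd).
  pose proof (proj1 (@filterlim_locally R R_UniformSpace _ _ u' v0) Hl0) as Hl0'. clear Hl0. rename Hl0' into Hl0.
  pose proof (proj1 (@filterlim_locally R R_UniformSpace _ _ u' w) Hl1) as Hl1'. clear Hl1. rename Hl1' into Hl1.
  destruct (Hl0 (mkposreal (c/2) ltac:(lra))) as [d1 Hd1].
  destruct (Hl1 (mkposreal (-w) ltac:(lra))) as [d2 Hd2].
  set (e1 := Rmin d1 ((t1 - t0)/2) / 2).
  set (e2 := Rmin d2 ((t1 - t0)/2) / 2).
  assert (He1 : 0 < e1 /\ e1 < d1 /\ e1 < (t1-t0)/2).
  { unfold e1. pose proof (cond_pos d1). 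
    pose proof (Rmin_l d1 ((t1-t0)/2)). pose proof (Rmin_r d1 ((t1-t0)/2)).
    assert (0 < Rmin d1 ((t1-t0)/2)) by (apply Rmin_glb_lt; lra). lra. }
  assert (He2 : 0 < e2 /\ e2 < d2 /\ e2 < (t1-t0)/2).
  { unfold e2. pose proof (cond_pos d2). 
    pose proof (Rmin_l d2 ((t1-t0)/2)). pose proof (Rmin_r d2 ((t1-t0)/2)).
    assert (0 < Rmin d2 ((t1-t0)/2)) by (apply Rmin_glb_lt; lra). lra. }
  assert (A1 := Hd1 (t0 + e1)). assert (A2 := Hd2 (t1 - e2)).
  simpl in A1, A2. unfold ball in A1, A2; simpl in A1, A2.
  unfold AbsRing_ball, abs, minus, plus, opp in A1, A2; simpl in A1, A2.
  assert (B1 : Rabs (u' (t0 + e1) - v0) < c/2).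
  { apply A1; [|lra]. rewrite Rabs_pos_eq; lra. }
  assert (B2 : Rabs (u' (t1 - e2) - w) < - w).
  { apply A2; [|lra]. rewrite Rabs_left; lra. }
  apply Rabs_def2 in B1. apply Rabs_def2 in B2.
  assert (Hm := Hmono (t0 + e1) (t1 - e2) ltac:(lra) ltac:(lra) ltac:(lra)).
  assert (p2 * (t1 - e2 - (t0 + e1)) >= p2 * (t1 - t0)) by nra.
  unfold c in *. lra.
Qed.
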